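(* Let $k \ge 2$ be an integer. Then for all but finitely many positive integers $N$, there is a connected graph $G$ with $\mathrm{SW}_k(G)=N$.
   Context: For a connected graph $G$ and a subset $S \subset V(G)$, the Steiner distance $d(S)$ is the smallest number of edges in a connected subgraph of $G$ whose vertex set contains $S$. For an integer $k\ge 2$, the Steiner--Wiener $k$ index of $G$ is $\mathrm{SW}_k(G)=\sum_{S \subset V(G),\ |S|=k} d(S)$. *)

(* Defs.v *)
From mathcomp Require Import all_boot.
Set Implicit Arguments. Unset Strict Implicit. Unset Printing Implicit Defensive.

Section Graphs.
Variable T : finType.
Implicit Type e : rel T.

Definition simple_graph e : Prop := symmetric e /\ irreflexive e.

Definition connected_graph e : Prop :=
  0 < #|T| /\ forall x y : T, connect e x y.

Definition edges e : {set {set T}} :=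
  [set f : {set T} | [exists x, exists y, (f == [set x; y]) && e x y]].

Definition edge_rel (F : {set {set T}}) : rel T := fun x y => [set x; y] \in F.

Definition steiner_subgraph e (S : {set T}) (WF : {set T} * {set {set T}}) : bool :=
  let W := WF.1 in let F := WF.2 in
  [&& F \subset edges e,
      [forall f in F, f \subset W],
      S \subset W &
      [forall x in W, forall y in W, connect (edge_rel F) x y]].

(* Steiner distance d(S): least number of edges of a connected subgraph
   whose vertex set contains S (the default #|edges e| is never reached
   when G is connected, since G itself is such a subgraph). *)
Definition steiner_dist e (S : {set T}) : nat :=
  \big[minn/#|edges e|]_(WF | steiner_subgraph e S WF) #|WF.2|.

Definition SW (k : nat) e : nat :=
  \sum_(S : {set T} | #|S| == k) steiner_dist e S.

End Graphs.

(* Main.v *)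
Require Import Defs.
From mathcomp Require Import all_boot zify.
Set Implicit Arguments. Unset Strict Implicit. Unset Printing Implicit Defensive.

Section Tree.
Variable T : finType.
Variable F : {set {set T}}.
Variable r : T.
Let E := edge_rel F.

Fixpoint reach (n : nat) : {set T} :=
  if n is n'.+1 then reach n' :|: [set y | [exists x in reach n', E x y]]
  else [set r].

Lemma reach_mono m n : m <= n -> reach m \subset reach n.
Proof.
elim: n => [|n IH]; first by rewrite leqn0 => /eqP ->.
rewrite leq_eqVlt => /orP [/eqP -> //| /IH H].
by apply: (subset_trans H); apply: subsetUl.
Qed.

Lemma reach_path p x n : path E x p -> x \in reach n -> last x p \in reach (n + size p).
Proof.
elim: p x n => [|y p IH] x n /=; first by rewrite addn0.
case/andP => Exy Hp Hx; rewrite addnS -addSn; apply: IH => //=.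
by rewrite inE; apply/orP; right; rewrite inE; apply/existsP; exists x; rewrite Hx.
Qed.

Definition PP y n := (y \in reach n) || ~~ connect E r y.

Lemma exPP y : exists n, PP y n.
Proof.
rewrite /PP; case: (boolP (connect E r y)) => [/connectP [p Hp ->]|]; last by exists 0; rewrite orbT.
exists (0 + size p); rewrite (reach_path Hp) //. by rewrite inE.
Qed.

Definition dist y := ex_minn (exPP y).

Lemma dist_reach y : connect E r y -> y \in reach (dist y).
Proof. rewrite /dist; case: ex_minnP => m Hm _ C; by move: Hm; rewrite /PP C orbF. Qed.

Lemma dist_min y n : y \in reach n -> dist y <= n.
Proof. rewrite /dist; case: ex_minnP => m _ Hm H; apply: Hm; by rewrite /PP H. Qed.

Definition par y := [pick x | (x \in reach (dist y).-1) && E x y].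
Definition pe y : {set T} := if par y is Some x then [set x; y] else set0.

Lemma par_spec y : connect E r y -> y != r ->
  exists x, [/\ par y = Some x, x \in reach (dist y).-1, E x y & dist x < dist y].
Proof.
move=> C Hy.
have Hd := dist_reach C.
have Hpos : 0 < dist y.
  case: (posnP (dist y)) => // H0; move: Hd; rewrite H0 /= inE => /eqP Hyr.
  by rewrite Hyr eqxx in Hy.
have Hnot : y \notin reach (dist y).-1.
  apply/negP => /dist_min; lia.
rewrite /par; case: pickP => [x /andP [Hx Ex]|H].
  exists x; split => //. have := dist_min Hx; lia.
exfalso; move: Hd; rewrite -(prednK Hpos) /= inE (negbTE Hnot) /= inE.
case/existsP => x /andP [Hx Ex]; by move: (H x); rewrite Hx Ex.
Qed.

Lemma tree_bound_r (W : {set T}) :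
  r \in W -> [forall x in W, forall y in W, connect E x y] -> #|W| <= #|F| + 1.
Proof.
move=> rW /forall_inP HC.
have Cr y : y \in W :\ r -> connect E r y.
  by rewrite inE => /andP [_ yW]; have /forall_inP := HC r rW; apply.
have inF : {in W :\ r, forall y, pe y \in F}.
  move=> y Hy; have Hyr : y != r by case/setD1P: Hy.
  have [x [Hp _ Ex _]] := par_spec (Cr y Hy) Hyr. by rewrite /pe Hp.
have inj : {in W :\ r &, injective pe}.
  move=> y y' Hy Hy' Heq; case: (eqVneq y y') => // Hne; exfalso.
  have Hyr : y != r by case/setD1P: Hy.
  have Hyr' : y' != r by case/setD1P: Hy'.
  have [x [Hp _ _ Dx]] := par_spec (Cr y Hy) Hyr.
  have [x' [Hp' _ _ Dx']] := par_spec (Cr y' Hy') Hyr'.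
  move: Heq; rewrite /pe Hp Hp' => Heq.
  have : y \in [set x'; y'] by rewrite -Heq !inE eqxx orbT.
  rewrite !inE (negbTE Hne) orbF => /eqP Ex'.
  have : y' \in [set x; y] by rewrite Heq !inE eqxx orbT.
  rewrite !inE [y' == y]eq_sym (negbTE Hne) orbF => /eqP Ex.
  subst; lia.
have : #|pe @: (W :\ r)| <= #|F|.
  apply: subset_leq_card; apply/subsetP => f /imsetP [y Hy ->]; exact: inF.
rewrite card_in_imset // (cardsD1 r W) rW; lia.
Qed.

End Tree.

Lemma tree_bound (T : finType) (F : {set {set T}}) (W : {set T}) :
  [forall x in W, forall y in W, connect (edge_rel F) x y] -> #|W| <= #|F| + 1.
Proof.
case: (set_0Vmem W) => [->|[r rW]]; first by rewrite cards0.
move=> H; exact: (@tree_bound_r T F r W rW H).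
Qed.

Section Gen.
Variable T : finType.
Variable e : rel T.
Hypothesis sym_e : symmetric e.
Hypothesis irr_e : irreflexive e.
Variable u : T.
Hypothesis univ : forall x, x != u -> e u x.

Lemma bigmin_le_seq (I : eqType) (r : seq I) (P : pred I) (F : I -> nat) x z :
  z \in r -> P z -> \big[minn/x]_(y <- r | P y) F y <= F z.
Proof.
elim: r => // i r IH; rewrite inE big_cons => /orP [/eqP <- ->|Hz Pz]; first exact: geq_minl.
case: (P i); last exact: IH.
exact: leq_trans (geq_minr _ _) (IH Hz Pz).
Qed.

Lemma sd_le (S : {set T}) WF : steiner_subgraph e S WF -> steiner_dist e S <= #|WF.2|.
Proof. by move=> H; rewrite /steiner_dist; apply: bigmin_le_seq => //; exact: mem_index_enum. Qed.

Lemma sd_ge (S : {set T}) b : (forall WF, steiner_subgraph e S WF -> b <= #|WF.2|) ->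
  b <= #|edges e| -> b <= steiner_dist e S.
Proof.
move=> H He; rewrite /steiner_dist; apply: (big_ind (fun x => b <= x)) => //.
  by move=> x y Hx Hy; rewrite leq_min Hx Hy.
Qed.

Lemma in_edges x y : e x y -> [set x; y] \in edges e.
Proof. by move=> H; rewrite inE; apply/existsP; exists x; apply/existsP; exists y; rewrite eqxx H. Qed.

Lemma edges_e a b : [set a; b] \in edges e -> e a b.
Proof.
rewrite inE => /existsP [x /existsP [y /andP [/eqP Hs Hxy]]].
have Ha : a \in [set x; y] by rewrite -Hs !inE eqxx.
have Hb : b \in [set x; y] by rewrite -Hs !inE eqxx orbT.
have Hx : x \in [set a; b] by rewrite Hs !inE eqxx.
have Hy : y \in [set a; b] by rewrite Hs !inE eqxx orbT.
case: (eqVneq a b) => [Eab|nab].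
  subst b; move: Hx Hy; rewrite !inE !orbb => /eqP Ex /eqP Ey; subst.
  by rewrite irr_e in Hxy.
move: Ha Hb; rewrite !inE => /orP [/eqP Ea|/eqP Ea] /orP [/eqP Eb|/eqP Eb]; subst => //.
- by rewrite eqxx in nab.
- by rewrite sym_e.
- by rewrite eqxx in nab.
Qed.

Lemma star_bound (S W : {set T}) c : c \in W -> S \subset W -> (forall x, x \in W -> x != c -> e c x) ->
  steiner_dist e S <= #|W| - 1.
Proof.
move=> cW SW Hc.
pose F := [set [set c; x] | x in W :\ c].
have HF : steiner_subgraph e S (W, F).
  apply/and4P; split => /=.
  - apply/subsetP => f /imsetP [x /setD1P [xc xW] ->]; apply: in_edges; exact: Hc.
  - apply/forall_inP => f /imsetP [x /setD1P [xc xW] ->].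
    by apply/subsetP => z; rewrite !inE => /orP [/eqP ->|/eqP ->].
  - exact: SW.
  - have Ec x : x \in W -> connect (edge_rel F) c x.
      move=> xW; case: (eqVneq x c) => [->|xc]; first exact: connect0.
      apply: connect1; rewrite /edge_rel; apply/imsetP; exists x; by [rewrite !inE xc xW|].
    have Ec' x : x \in W -> connect (edge_rel F) x c.
      move=> xW; case: (eqVneq x c) => [->|xc]; first exact: connect0.
      apply: connect1; rewrite /edge_rel; apply/imsetP; exists x; first by rewrite !inE xc xW.
      by rewrite setUC.
    apply/forall_inP => x xW; apply/forall_inP => y yW.
    exact: (connect_trans (Ec' x xW) (Ec y yW)).
apply: (leq_trans (sd_le HF)) => /=.
rewrite (cardsD1 c W) cW /=; rewrite add1n subSS subn0; exact: leq_imset_card.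
Qed.

Lemma edges_card : #|T| <= #|edges e| + 1.
Proof.
rewrite -cardsT; apply: tree_bound.
have Cu x : connect (edge_rel (edges e)) x u.
  case: (eqVneq x u) => [->|xu]; first exact: connect0.
  apply: connect1; rewrite /edge_rel setUC; apply: in_edges; exact: univ.
have Cu' x : connect (edge_rel (edges e)) u x.
  case: (eqVneq x u) => [->|xu]; first exact: connect0.
  apply: connect1; rewrite /edge_rel; apply: in_edges; exact: univ.
apply/forall_inP => x _; apply/forall_inP => y _; exact: connect_trans (Cu x) (Cu' y).
Qed.

Definition good (S : {set T}) := [exists c in S, [forall x in S, (x != c) ==> e c x]].

Lemma sd_lower (S : {set T}) : #|S| <= #|T| -> #|S| - 1 <= steiner_dist e S.
Proof.
move=> HS; apply: sd_ge.
  case=> W F /and4P [_ _ SW /= HC]; have := tree_bound HC.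
  have := subset_leq_card SW; rewrite /=; lia.
have := edges_card; lia.
Qed.

Lemma sd_good (S : {set T}) : #|S| <= #|T| -> good S -> steiner_dist e S = #|S| - 1.
Proof.
move=> HS /exists_inP [c cS /forall_inP Hc]; apply/eqP; rewrite eqn_leq sd_lower // andbT.
apply: (star_bound cS (subxx S)) => x xS xc; by move: (Hc x xS); rewrite xc.
Qed.

Lemma sd_bad (S : {set T}) : #|S| < #|T| -> ~~ good S ->
  (forall F : {set {set T}}, F \subset edges e -> (forall f, f \in F -> f \subset S) ->
     [forall x in S, forall y in S, connect (edge_rel F) x y] -> good S) ->
  steiner_dist e S = #|S|.
Proof.
move=> HS Hg HX; apply/eqP; rewrite eqn_leq; apply/andP; split.
  have := @star_bound S (u |: S) u (setU11 _ _) (subsetUr _ _).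
  have Hc : forall x, x \in u |: S -> x != u -> e u x by move=> x _; exact: univ.
  move=> /(_ Hc) H; apply: (leq_trans H).
  rewrite cardsU1; case: (u \in S); rewrite /=; lia.
apply: sd_ge; last by have := edges_card; lia.
case=> W F /and4P [/= HFe /forall_inP HFW SW HC]; have := tree_bound HC.
rewrite /=; case: (ltnP #|S| #|W|) => [|HW]; first lia.
have /eqP EW : S == W by rewrite eqEcard SW HW.
subst W; have := HX F HFe HFW HC; by rewrite (negbTE Hg).
Qed.

Lemma SW_formula k : 0 < k -> k < #|T| ->
  (forall S : {set T}, #|S| = k -> forall F : {set {set T}}, F \subset edges e -> (forall f, f \in F -> f \subset S) ->
     [forall x in S, forall y in S, connect (edge_rel F) x y] -> good S) ->
  SW k e + \sum_(S : {set T} | #|S| == k) (good S : nat) = k * 'C(#|T|, k).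
Proof.
move=> k0 kT HX; rewrite /SW -big_split /=.
rewrite (eq_bigr (fun _ => k)); last first.
  move=> S /eqP HS; case: (boolP (good S)) => Hg.
    rewrite (sd_good _ Hg); last by rewrite HS ltnW.
    rewrite HS /=; lia.
  rewrite (sd_bad _ Hg); first by rewrite HS addn0.
    by rewrite HS.
  exact: HX.
rewrite sum_nat_const -card_draws.
have -> : #|[set A : {set T} | #|A| == k]| = #|[pred S : {set T} | #|S| == k]|.
  by apply: eq_card => S; rewrite inE.
by rewrite mulnC.
Qed.

Lemma connect_inv (E : rel T) (P : pred T) : (forall a b, E a b -> P a -> P b) ->
  forall x y, connect E x y -> P x -> P y.
Proof.
move=> H x y /connectP [p Hp ->]; elim: p x Hp => //= z p IH x /andP [Exz Hp] Px.
exact: IH Hp (H _ _ Exz Px).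
Qed.

End Gen.

Lemma card_draws_in (T : finType) (A : {set T}) a j : a \in A ->
  #|[set S : {set T} | [&& #|S| == j.+1, a \in S & S \subset A]]| = 'C(#|A| - 1, j).
Proof.
move=> aA.
have -> : #|A| - 1 = #|A :\ a| by rewrite (cardsD1 a A) aA; lia.
rewrite -cards_draws.
set D := [set S : {set T} | _].
rewrite -(@card_in_imset _ _ (fun S => S :\ a) D).
  apply: eq_card => B; apply/idP/idP.
    move=> /imsetP [S]; rewrite /D inE => /and3P [/eqP HS aS SA] ->.
    rewrite inE; apply/andP; split; first by apply: setSD.
    by rewrite (cardsD1 a S) aS in HS; apply/eqP; lia.
  rewrite inE => /andP [BA /eqP HB]; apply/imsetP; exists (a |: B).
    have aB : a \notin B by apply/negP => /(subsetP BA); rewrite !inE eqxx.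
    rewrite /D inE; apply/and3P; split.
    - by rewrite cardsU1 aB HB.
    - by rewrite setU11.
    - by apply/subsetP => x; rewrite !inE => /orP [/eqP ->//|/(subsetP BA)]; rewrite inE => /andP [].
  have aB : a \notin B by apply/negP => /(subsetP BA); rewrite !inE eqxx.
  by rewrite setU1K.
move=> S S'; rewrite /D !inE => /and3P [_ aS _] /and3P [_ aS' _] H.
by rewrite -(setD1K aS) -(setD1K aS') H.
Qed.

Lemma sum_bool_card (I : finType) (P Q : pred I) :
  \sum_(i | P i) (Q i : nat) = #|[set i | P i && Q i]|.
Proof.
rewrite -sum1_card big_mkcond /= [in RHS]big_mkcond /=.
by apply: eq_bigr => i _; rewrite inE; case: (P i); case: (Q i).
Qed.

Lemma sum_unique (I : finType) (P : pred I) : (forall i j, P i -> P j -> i = j) ->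
  \sum_i (P i : nat) = [exists i, P i].
Proof.
move=> H; case: (boolP [exists i, P i]) => [/existsP [i Pi]|/existsPn Hn].
  rewrite (bigD1 i) //= Pi big1 // => j nji; case: (boolP (P j)) => // Pj.
  by rewrite (H _ _ Pj Pi) eqxx in nji.
by rewrite big1 // => i _; rewrite (negbTE (Hn i)).
Qed.

Section Spec.
Variables (L : nat) (lab : nat -> nat) (fl : nat -> bool).
Local Notation T := 'I_L.+1.
Local Notation u := (@ord_max L).

Definition sg (x y : T) : bool :=
  (x != y) && [|| x == u, y == u | (lab x == lab y) && (if x < y then fl y else fl x)].

Lemma sg_sym : symmetric sg.
Proof.
move=> x y; rewrite /sg eq_sym [lab y == _]eq_sym; case: (eqVneq y x) => //= nxy.
case: (x == u); case: (y == u) => //=; case: (ltngtP x y) => // H.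
by case/eqP: nxy; apply: val_inj.
Qed.

Lemma sg_irr : irreflexive sg.
Proof. by move=> x; rewrite /sg eqxx. Qed.

Lemma sg_univ x : x != u -> sg u x.
Proof. by move=> H; rewrite /sg eq_sym H eqxx. Qed.

Lemma sg_X (S : {set T}) : 1 < #|S| -> forall F : {set {set T}}, F \subset edges sg ->
  (forall f, f \in F -> f \subset S) ->
  [forall x in S, forall y in S, connect (edge_rel F) x y] -> good sg S.
Proof.
move=> S2 F HFe HFS /forall_inP HC.
case: (boolP (u \in S)) => uS.
  apply/exists_inP; exists u => //; apply/forall_inP => x _; apply/implyP => xu.
  by apply: sg_univ.
have [x0 x0S] : exists x0, x0 \in S by apply/card_gt0P; lia.
case: (@arg_maxnP _ x0 (mem S) (fun x => val x) x0S) => m mS0 Hm.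
have mS : m \in S := mS0.
have EF a b : edge_rel F a b -> [/\ sg a b, a \in S & b \in S].
  move=> H; have Hf := HFS _ H; split.
  - exact: (edges_e sg_sym sg_irr (subsetP HFe _ H)).
  - by apply: (subsetP Hf); rewrite !inE eqxx.
  - by apply: (subsetP Hf); rewrite !inE eqxx orbT.
have nu a : a \in S -> (a == u) = false.
  by move=> aS; apply/negP => /eqP Ha; rewrite -Ha aS in uS.
have Hlab a b : edge_rel F a b -> lab a = lab b.
  case/EF => H aS bS; move: H; rewrite /sg (nu a aS) (nu b bS) /=.
  by case/andP => _ /andP [/eqP].
have Lm x : x \in S -> lab x = lab m.
  move=> xS; have Cmx : connect (edge_rel F) m x by have /forall_inP := HC m mS; apply.
  have Hinv : forall a b, edge_rel F a b -> (fun y : T => lab y == lab m) a -> (fun y : T => lab y == lab m) b.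
    by move=> a b Hab /= /eqP <-; rewrite (Hlab _ _ Hab).
  by apply/eqP; apply: (connect_inv Hinv Cmx); rewrite /= eqxx.
have flm : fl m.
  have [x xS xm] : exists2 x, x \in S & x != m.
    have : 0 < #|S :\ m| by rewrite (cardsD1 m S) mS in S2; lia.
    by case/card_gt0P => x /setD1P [xm xS]; exists x.
  have Cmx : connect (edge_rel F) m x by have /forall_inP := HC m mS; apply.
  case/connectP: Cmx => [[|z p]] /=; first by move=> _ Hx; rewrite Hx eqxx in xm.
  case/andP => Hmz _ _; case/EF: Hmz => H _ zS; move: H.
  rewrite /sg (nu m mS) (nu z zS) /=; have := Hm z zS; rewrite /= => zm.
  have -> : (m < z) = false by apply/negbTE; rewrite -leqNgt.
  by case/andP => _ /andP [].
apply/exists_inP; exists m => //; apply/forall_inP => x xS; apply/implyP => xm.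
rewrite /sg eq_sym xm (nu m mS) (nu x xS) /= (Lm x xS) eqxx /=.
have := Hm x xS; rewrite /= => xm'.
by have -> : (m < x) = false by apply/negbTE; rewrite -leqNgt.
Qed.


Definition Cm (m : T) : {set T} := [set j : T | (lab j == lab m) && (j <= m)].
Definition cnt (m : nat) := \sum_(0 <= j < m) (lab j == lab m : nat).

Lemma good_char (S : {set T}) : 1 < #|S| ->
  good sg S = (u \in S) || [exists m, [&& m != u, fl m, m \in S & S \subset Cm m]].
Proof.
move=> S2; apply/idP/idP.
  case/exists_inP => c cS /forall_inP Hc.
  case: (boolP (u \in S)) => //= uS.
  have nu a : a \in S -> (a == u) = false.
    by move=> aS; apply/negP => /eqP Ha; rewrite -Ha aS in uS.
  have Hc' x : x \in S -> x != c -> sg c x by move=> xS xc; have := Hc x xS; rewrite xc.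
  have Lc x : x \in S -> lab x = lab c.
    move=> xS; case: (eqVneq x c) => [->//|xc]; move: (Hc' x xS xc).
    by rewrite /sg (nu c cS) (nu x xS) /= => /andP [_ /andP [/eqP ->]].
  case: (@arg_maxnP _ c (mem S) (fun x => val x) cS) => m mS0 Hm.
  have mS : m \in S := mS0.
  have flm : fl m.
    case: (eqVneq c m) => [Ecm|cm].
      have [x xS xm] : exists2 x, x \in S & x != m.
        have : 0 < #|S :\ m| by rewrite (cardsD1 m S) mS add1n ltnS in S2.
        by case/card_gt0P => x /setD1P [xm xS]; exists x.
      have := Hc' x xS; rewrite Ecm => /(_ xm).
      rewrite /sg (nu m mS) (nu x xS) /=; have := Hm x xS; rewrite /= => xm'.
      have -> : (m < x) = false by apply/negbTE; rewrite -leqNgt.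
      by case/andP => _ /andP [].
    have := Hc' m mS; rewrite eq_sym => /(_ cm).
    rewrite /sg (nu m mS) (nu c cS) /=; have := Hm c cS; rewrite /= => cm'.
    have -> : (c < m) by rewrite ltn_neqAle cm' andbT; apply/eqP => H; case/eqP: cm; apply: val_inj.
    by case/andP => _ /andP [].
  apply/existsP; exists m; rewrite (nu m mS) flm mS /=.
  apply/subsetP => x xS; rewrite inE (Lc x xS) (Lc m mS) eqxx /=; exact: (Hm x xS).
case/orP => [uS | /existsP [m /and4P [mu flm mS SC]]].
  apply/exists_inP; exists u => //; apply/forall_inP => x _; apply/implyP => xu.
  by apply: sg_univ.
apply/exists_inP; exists m => //; apply/forall_inP => x xS; apply/implyP => xm.
have := subsetP SC x xS; rewrite inE => /andP [/eqP Hl xm'].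
rewrite /sg eq_sym xm /=; apply/orP; right; apply/orP; right.
rewrite Hl eqxx /=.
by have -> : (m < x) = false by apply/negbTE; rewrite -leqNgt.
Qed.

Lemma card_Cm (m : T) : #|Cm m| = (cnt m).+1.
Proof.
rewrite -sum1_card big_mkcond /=.
rewrite (eq_bigr (fun j : T => ((lab j == lab m) && (j <= m) : nat))); last first.
  by move=> j _; rewrite inE; case: (_ && _).
rewrite -(big_mkord xpredT (fun j => ((lab j == lab m) && (j <= m) : nat))).
rewrite (@big_cat_nat _ _ _ m.+1) //=.
rewrite [X in _ + X](eq_big_nat _ _ (F2 := fun _ => 0)); last first.
  by move=> i /andP [Hi _]; rewrite leqNgt Hi andbF.
rewrite sum_nat_const_nat muln0 addn0 big_nat_recr //= eqxx leqnn /= addn1.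
congr (_.+1); rewrite /cnt; apply: eq_big_nat => i /andP [_ Hi].
by rewrite (ltnW Hi) andbT.
Qed.

Lemma count_good K : 0 < K ->
  \sum_(S : {set T} | #|S| == K.+1) (good sg S : nat) =
  'C(L, K) + \sum_(m < L) fl m * 'C(cnt m, K).
Proof.
move=> K0.
rewrite (eq_bigr (fun S : {set T} => (u \in S : nat) +
   \sum_(m : T) ([&& m != u, fl m, m \in S & S \subset Cm m] : nat))); last first.
  move=> S /eqP HS; rewrite good_char; last by rewrite HS; lia.
  case: (boolP (u \in S)) => uS /=.
    rewrite big1 // => m _; apply/eqP; rewrite eqb0; apply/negP => /and4P [mu _ _ SC].
    have := subsetP SC u uS; rewrite inE => /andP [_ um].
    case/eqP: mu; apply: val_inj; move: um; rewrite /= => um; have := ltn_ord m; lia.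
  rewrite sum_unique //= => m m' /and4P [_ _ mS SC] /and4P [_ _ m'S SC'].
  have := subsetP SC' m mS; have := subsetP SC m' m'S; rewrite !inE => /andP [_ H1] /andP [_ H2].
  by apply: val_inj; apply/eqP; rewrite eqn_leq H1 H2.
rewrite big_split /=; congr (_ + _).
  rewrite sum_bool_card.
  have -> : 'C(L, K) = 'C(#|[set: T]| - 1, K) by rewrite cardsT card_ord subn1.
  rewrite -(card_draws_in K (in_setT u)); apply: eq_card => S; rewrite !inE subsetT andbT.
  by [].
rewrite (exchange_big _ _ _ (fun S : {set T} => #|S| == K.+1) xpredT) /=.
rewrite (eq_bigr (fun m : T => ((m != u) && fl m) * 'C(#|Cm m| - 1, K))); last first.
  move=> m _; case: (boolP ((m != u) && fl m)) => H.
    have mC : m \in Cm m by rewrite inE eqxx leqnn.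
    rewrite mul1n sum_bool_card -(card_draws_in K mC).
    apply: eq_card => S; rewrite !inE; case/andP: H => -> ->.
    by [].
  rewrite mul0n big1 // => S _; apply/eqP; rewrite eqb0; apply/negP => /and4P [H1 H2 _ _].
  by rewrite H1 H2 in H.
rewrite big_ord_recr /= eqxx /= mul0n addn0.
apply: eq_bigr => i _; rewrite card_Cm subn1 /=.
have -> : (widen_ord (leqnSn L) i != u) by rewrite neq_ltn /= ltn_ord.
by [].
Qed.


Lemma SW_spec K : 0 < K -> K < L ->
  SW K.+1 sg + ('C(L, K) + \sum_(m < L) fl m * 'C(cnt m, K)) = K.+1 * 'C(L.+1, K.+1).
Proof.
move=> K0 KL; rewrite -count_good //.
have := @SW_formula T sg u sg_univ K.+1 (ltn0Sn _).
rewrite card_ord; apply => //.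
move=> S HS; apply: sg_X; rewrite HS; lia.
Qed.

End Spec.

Lemma bin_le j m : j.*2 < m -> 'C(m, j) <= 'C(m, j.+1).
Proof.
move=> H; have E := mul_bin_left m j.
have : j.+1 * 'C(m, j) <= j.+1 * 'C(m, j.+1).
  rewrite E; apply: leq_mul => //; lia.
by rewrite leq_pmul2l.
Qed.

Lemma sum0_nat a b : \sum_(a <= m < b) 0 = 0.
Proof. by rewrite sum_nat_const_nat muln0. Qed.

Lemma rep K : forall h, K.*2.+1 <= h -> forall t, t <= 'C(h, K.+1) ->
  exists (D : nat -> bool) rho, rho <= 'C(K.*2.+1, K.+1) /\
    t = \sum_(0 <= m < h) D m * 'C(m, K) + rho.
Proof.
elim=> [|h IH] Hh t Ht; first by move: Hh; rewrite ltn0.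
case: (ltngtP K.*2.+1 h.+1) => [Hlt|Hgt|Heq]; last 1 first.
- exists (fun _ => false), t; split; first by rewrite Heq.
  by rewrite (eq_big_nat _ _ (F2 := fun _ => 0)) // sum0_nat add0n.
- have Hh' : K.*2.+1 <= h by lia.
  move: Ht; rewrite binS => Ht.
  case: (leqP t 'C(h, K.+1)) => Hth.
    have [D [rho [Hr Et]]] := IH Hh' t Hth.
    exists (fun m => D m && (m < h)), rho; split => //.
    rewrite big_nat_recr //= ltnn andbF mul0n addn0 Et; congr (_ + _).
    by apply: eq_big_nat => i /andP [_ Hi]; rewrite Hi andbT.
  have Hb : 'C(h, K) <= 'C(h, K.+1) by apply: bin_le; lia.
  have [D [rho [Hr Et]]] := IH Hh' (t - 'C(h, K)) (ltac:(lia)).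
  exists (fun m => (m == h) || (D m && (m < h))), rho; split => //.
  rewrite big_nat_recr //= eqxx /= mul1n.
  have -> : \sum_(0 <= m < h) ((m == h) || D m && (m < h)) * 'C(m, K) =
            \sum_(0 <= m < h) D m * 'C(m, K).
    apply: eq_big_nat => i /andP [_ Hi]; rewrite Hi andbT.
    by have -> : (i == h) = false by apply/negbTE; rewrite neq_ltn Hi.
  lia.
- by move: Hh; rewrite leqNgt Hgt.
Qed.

Lemma binS_le2 K m : K.*2 <= m -> 'C(m.+1, K) <= 2 * 'C(m, K).
Proof.
case: K => [|K] H; first by rewrite !bin0.
rewrite binS; have := @bin_le K m; lia.
Qed.

Lemma bin_shift K c h : K.*2 <= h -> 'C(h + c, K) <= 2 ^ c * 'C(h, K).
Proof.
move=> H; elim: c => [|c IH]; first by rewrite addn0 expn0 mul1n.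
rewrite addnS expnS -mulnA; apply: leq_trans (binS_le2 _) _; first lia.
by rewrite leq_pmul2l.
Qed.

Lemma growth K c : exists H1, forall h, H1 <= h -> K.+1 * 'C(h + c, K) <= 'C(h.+1, K.+1).
Proof.
exists (maxn K.*2 (K.+1 * K.+1 * 2 ^ c)) => h; rewrite geq_max => /andP [H1 H2].
have E := mul_bin_diag h.+1 K; rewrite /= in E.
have A := bin_shift c H1.
rewrite -(leq_pmul2l (ltn0Sn K)) -E.
apply: (@leq_trans (K.+1 * K.+1 * 2 ^ c * 'C(h, K))).
  rewrite -!mulnA leq_pmul2l // leq_pmul2l //.
apply: leq_mul => //; lia.
Qed.

Section W.
Variables (h K rho : nat) (D : nat -> bool).
Local Notation k := K.+1.

Definition labf m := if m < h then 0 else (m - h) %/ k + 1.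
Definition flf m := if m < h then D m else ((m - h) %% k == K) && ((m - h) %/ k < rho).

Lemma cnt_main m : m < h -> cnt labf m = m.
Proof.
move=> mh; rewrite /cnt (eq_big_nat _ _ (F2 := fun _ => 1)).
  by rewrite sum_nat_const_nat muln1 subn0.
move=> j /andP [_ jm]; rewrite /labf mh.
by have -> : j < h by lia.
Qed.

Lemma lab_block b i : i < k -> labf (h + b * k + i) = b.+1.
Proof.
move=> ik; rewrite /labf; have -> : (h + b * k + i < h) = false by lia.
have -> : h + b * k + i - h = b * k + i by lia.
by rewrite divnMDl // divn_small // addn0 addn1.
Qed.

Lemma fl_block b i : i < k -> flf (h + b * k + i) = (i == K) && (b < rho).
Proof.
move=> ik; rewrite /flf; have -> : (h + b * k + i < h) = false by lia.
have -> : h + b * k + i - h = b * k + i by lia.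
by rewrite divnMDl // divn_small // addn0 modnMDl modn_small.
Qed.

Lemma cnt_top b : cnt labf (h + b * k + K) = K.
Proof.
rewrite /cnt lab_block // (@big_cat_nat _ _ _ (h + b * k)) //=; last by lia.
rewrite (eq_big_nat _ _ (F2 := fun _ => 0)); last first.
  move=> j /andP [_ Hj]; rewrite /labf; case: (ltnP j h) => // jh.
  have : (j - h) %/ k < b by rewrite ltn_divLR //; lia.
  by move=> H; apply/eqP; rewrite eqb0; apply/eqP => E; lia.
rewrite sum0_nat add0n (eq_big_nat _ _ (F2 := fun _ => 1)); last first.
  move=> j /andP [H1 H2].
  have -> : j = h + b * k + (j - h - b * k) by lia.
  by rewrite lab_block ?eqxx //; lia.
rewrite sum_nat_const_nat muln1; lia.
Qed.

Lemma block_sum b : \sum_(h <= m < h + b * k) flf m * 'C(cnt labf m, K) = minn b rho.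
Proof.
elim: b => [|b IH]; first by rewrite mul0n addn0 big_geq // min0n.
rewrite (@big_cat_nat _ _ _ (h + b * k)) ?leq_addr //=; last by lia.
rewrite IH.
have -> : h + b.+1 * k = (h + b * k + K).+1 by rewrite mulSn; lia.
rewrite big_nat_recr /=; last by lia.
rewrite (eq_big_nat _ _ (F2 := fun _ => 0)); last first.
  move=> j /andP [H1 H2].
  have -> : j = h + b * k + (j - h - b * k) by lia.
  rewrite fl_block; last by lia.
  by have -> : (j - h - b * k == K) = false by apply/eqP; lia.
rewrite sum0_nat add0n fl_block // eqxx /= cnt_top binn muln1.
case: (ltnP b rho) => H /=; lia.
Qed.

Lemma weight R : rho <= R ->
  \sum_(m < h + R * k) flf m * 'C(cnt labf m, K) = \sum_(0 <= m < h) D m * 'C(m, K) + rho.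
Proof.
move=> HR.
rewrite -(big_mkord xpredT (fun m => flf m * 'C(cnt labf m, K))).
rewrite (@big_cat_nat _ _ _ h) //=; last by lia.
rewrite block_sum; have -> : minn R rho = rho by lia.
congr (_ + _); apply: eq_big_nat => m /andP [_ mh].
by rewrite /flf mh cnt_main.
Qed.

End W.

Lemma sg_simple L lab fl : simple_graph (@sg L lab fl).
Proof. split; [exact: sg_sym | exact: sg_irr]. Qed.

Lemma sg_connected L lab fl : connected_graph (@sg L lab fl).
Proof.
split; first by rewrite card_ord.
have C1 x : connect (@sg L lab fl) x ord_max.
  case: (eqVneq x ord_max) => [->|xu]; first exact: connect0.
  by apply: connect1; rewrite sg_sym; apply: sg_univ.
have C2 x : connect (@sg L lab fl) ord_max x.
  case: (eqVneq x ord_max) => [->|xu]; first exact: connect0.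
  by apply: connect1; apply: sg_univ.
move=> x y; exact: connect_trans (C1 x) (C2 y).
Qed.

Theorem theorem1p1 (k : nat) (hk : 2 <= k) :
  exists M : nat, forall N : nat, M < N ->
    exists (n : nat) (e : rel 'I_n),
      simple_graph e /\ connected_graph e /\ SW k e = N.
Proof.
case: k hk => [|K] // hk; have K0 : 0 < K by lia.
pose R := 'C(K.*2.+1, K.+1).
pose f h := K.+1 * 'C((h + R * K.+1).+1, K.+1).
pose g h := 'C(h + R * K.+1, K).
have [H1 HG] := growth K (R * K.+1).+1.
pose H := maxn H1 K.*2.+1.
exists (f H) => N HN.
have fg h : K < h -> f h = (h + R * K.+1).+1 * g h.
  by move=> Hh; rewrite /f /g -mul_bin_diag.
have exP : exists h, (H <= h) && (N + g h <= f h).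
  exists (N + H); rewrite leq_addl /= fg; last by rewrite /H; lia.
  have : 0 < g (N + H) by rewrite /g bin_gt0; rewrite /H; lia.
  nia.
case: (ex_minnP exP) => hm /andP [Hhm Pm] Hmin.
have [h' Eh'] : exists h', hm = h'.+1.
  case: hm Hhm Pm Hmin => [|h'] Hhm Pm Hmin; last by exists h'.
  exfalso; move: Hhm; rewrite /H; lia.
have Hh' : H <= h'.
  case: (ltnP h' H) => // Hlt; exfalso.
  have EH : hm = H by lia.
  move: Pm; rewrite EH; lia.
have nP : f h' < N + g h'.
  rewrite ltnNge; apply/negP => C; have := Hmin h'; rewrite Hh' C /= => /(_ isT); lia.
have Ef : f hm = f h' + K.+1 * 'C((h' + R * K.+1).+1, K).
  by rewrite Eh' /f addSn binS mulnDr.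
have Gr := HG h' (leq_trans (leq_maxl _ _) Hh').
rewrite addnS in Gr.
have Gm : g h' <= g hm by rewrite /g leq_bin2l // Eh'.
pose t := f hm - N - g hm.
have Ht : t <= 'C(hm, K.+1).
  rewrite /t; move: Ef Gr nP Gm Pm; rewrite -Eh'; clear; lia.
have Hh0 : K.*2.+1 <= hm by move: Hh'; rewrite /H Eh'; lia.
have [D [rho [Hr Et]]] := rep Hh0 Ht.
pose L := hm + R * K.+1.
exists L.+1, (@sg L (labf hm K) (flf hm K rho D)).
split; first exact: sg_simple.
split; first exact: sg_connected.
have KL : K < L by rewrite /L; lia.
have := SW_spec (labf hm K) (flf hm K rho D) K0 KL.
rewrite weight // -Et.
have -> : 'C(L, K) = g hm by [].
have -> : K.+1 * 'C(L.+1, K.+1) = f hm by [].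
rewrite /t; lia.
Qed.
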